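(* Let $H$ be a Hilbert space over $\mathbb{F}\in\{\mathbb{R},\mathbb{C}\}$ with $\dim H\ge n$, $J$ an index set and $(U(j))_{j\in J}$ a family with $U(j)=(u(j)_1,\dots,u(j)_n)\in H^n$. Suppose that the closed... more precisely, suppose that the linear subspace $\mathrm{Span}(\{u(j)_k:\ j\in J,\ k\in[1,n]\})$ has codimension at least $3n$ in $H$. Then the set $\mathcal{S}=\bigcap_{j\in J}\big(U(j)+St(n,H)\big)\subseteq H^n$ is polygonally connected: for any $X,Y\in\mathcal{S}$ there exists $Z\in H^n$ such that $tZ+(1-t)X\in\mathcal{S}$ and $tY+(1-t)Z\in\mathcal{S}$ for all $t\in[0,1]$ (so $X$ and $Y$ are joined in $\mathcal{S}$ by a polygonal path made of two straight segments).
   Context: $St(n,H)=\{(h_1,\dots,h_n)\in H^n:\ h_1,\dots,h_n \text{ linearly independent}\}$. For $U\in H^n$, $U+St(n,H)=\{U+h: h\in St(n,H)\}$. The codimension of a linear subspace $W\subseteq H$ is $\dim(H/W)$ (possibly infinite). *)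

(* Defs.v *)
From HB Require Import structures.
From mathcomp Require Import all_boot all_order all_algebra.
From mathcomp Require Import complex reals.
Set Implicit Arguments. Unset Strict Implicit. Unset Printing Implicit Defensive.
Import Order.TTheory GRing.Theory Num.Theory.
Local Open Scope ring_scope.

(* The scalar field F in {R, C}: [scal R true] is R, [scal R false] is C = R[i]. *)
Definition scal (R : realType) (b : bool) : numFieldType :=
  if b then (R : numFieldType) else (R[i] : numFieldType).

Definition sconj (R : realType) (b : bool) : scal R b -> scal R b :=
  match b return scal R b -> scal R b with
  | true => fun x => x
  | false => fun z : R[i] => (z^*)%C
  end.

(* Norms are compared through their squares
   [ip x x] (which are real and nonnegative). *)
Record hilbert_space (R : realType) (b : bool) (V : lmodType (scal R b)) := {
  ip : V -> V -> scal R b;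
  ip_linear : forall (a : scal R b) (x y z : V), ip (a *: x + y) z = a * ip x z + ip y z;
  ip_conj_sym : forall x y : V, ip y x = sconj (ip x y);
  ip_ge0 : forall x : V, 0 <= ip x x;
  ip_eq0 : forall x : V, ip x x = 0 -> x = 0;
  ip_complete : forall u : nat -> V,
    (forall e : scal R b, 0 < e -> exists N : nat, forall m k : nat,
        (N <= m)%N -> (N <= k)%N -> ip (u m - u k) (u m - u k) < e) ->
    exists x : V, forall e : scal R b, 0 < e -> exists N : nat, forall m : nat,
        (N <= m)%N -> ip (u m - x) (u m - x) < e
}.

Section LinAlg.
Variables (F : pzRingType) (V : lmodType F).

Definition lin_indep (m : nat) (h : 'I_m -> V) : Prop :=
  forall c : 'I_m -> F, \sum_(i < m) c i *: h i = 0 -> forall i, c i = 0.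

Definition St (n : nat) : ('I_n -> V) -> Prop := fun h => lin_indep h.

Definition translate_St (n : nat) (U : 'I_n -> V) : ('I_n -> V) -> Prop :=
  fun X => exists h, St h /\ X = (fun k => U k + h k).

Definition lspan (S : V -> Prop) : V -> Prop :=
  fun x => exists (m : nat) (c : 'I_m -> F) (s : 'I_m -> V),
    (forall i, S (s i)) /\ x = \sum_(i < m) c i *: s i.

Definition dim_ge (m : nat) : Prop := exists v : 'I_m -> V, lin_indep v.

(* codim W = dim (V/W) >= m : there are m vectors linearly independent modulo W *)
Definition codim_ge (W : V -> Prop) (m : nat) : Prop :=
  exists v : 'I_m -> V, forall c : 'I_m -> F,
    W (\sum_(i < m) c i *: v i) -> forall i, c i = 0.
End LinAlg.

(* Main.v *)
Require Import Defs.
From HB Require Import structures.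
From mathcomp Require Import all_boot all_order all_algebra.
From mathcomp Require Import complex reals.
From Stdlib Require Import Classical FunctionalExtensionality.
Import Order.TTheory GRing.Theory Num.Theory.
Set Implicit Arguments. Unset Strict Implicit. Unset Printing Implicit Defensive.
Local Open Scope ring_scope.

Section Aux.
Variables (F : fieldType) (V : lmodType F).

Definition subsp (W : V -> Prop) := W 0 /\ (forall a x y, W x -> W y -> W (a *: x + y)).
Definition indep_mod (W : V -> Prop) p (v : 'I_p -> V) :=
  forall c : 'I_p -> F, W (\sum_(i < p) c i *: v i) -> forall i, c i = 0.
Definition ext (W : V -> Prop) (x : V) := fun y => exists w a, W w /\ y = w + a *: x.
Definition pspan (W : V -> Prop) k (x : 'I_k -> V) :=
  fun y => exists w (d : 'I_k -> F), W w /\ y = w + \sum_(i < k) d i *: x i.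

Lemma subsp_scale W a x : subsp W -> W x -> W (a *: x).
Proof. by move=> [W0 WD] Wx; rewrite -[_ *: _]addr0; apply: WD. Qed.
Lemma subsp_add W x y : subsp W -> W x -> W y -> W (x + y).
Proof. by move=> [W0 WD] Wx Wy; rewrite -[x]scale1r; apply: WD. Qed.

Lemma subsp_ext W x : subsp W -> subsp (ext W x).
Proof.
move=> sW; split.
  by exists 0, 0; split; [case: sW|rewrite scale0r addr0].
move=> a y z [w1 [a1 [W1 ->]]] [w2 [a2 [W2 ->]]].
exists (a *: w1 + w2), (a * a1 + a2); split; first by case: sW => _; apply.
rewrite scalerDr scalerA scalerDl -!addrA; congr (_ + _).
by rewrite addrCA.
Qed.

Lemma subsp_pspan W k x : subsp W -> subsp (@pspan W k x).
Proof.
move=> sW; split.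
  exists 0, (fun _ => 0); split; first by case: sW.
  by rewrite big1 ?addr0 // => i _; rewrite scale0r.
move=> a y z [w1 [d1 [W1 ->]]] [w2 [d2 [W2 ->]]].
exists (a *: w1 + w2), (fun i => a * d1 i + d2 i); split; first by case: sW => _; apply.
rewrite scalerDr scaler_sumr.
have -> : \sum_(i < k) (a * d1 i + d2 i) *: x i =
   \sum_(i < k) a *: (d1 i *: x i) + \sum_(i < k) d2 i *: x i.
  by rewrite -big_split; apply: eq_bigr => i _; rewrite scalerDl scalerA.
rewrite -!addrA; congr (_ + _).
by rewrite addrCA.
Qed.

Lemma subsp_lspan (S : V -> Prop) : subsp (lspan S).
Proof.
split.
  by exists 0%N, (fun _ => 0), (fun _ => 0); split => [[]//|]; rewrite big_ord0.
move=> a y z [m1 [c1 [s1 [S1 ->]]]] [m2 [c2 [s2 [S2 ->]]]].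
exists (m1 + m2)%N,
  (fun i => match split i with inl i1 => a * c1 i1 | inr i2 => c2 i2 end),
  (fun i => match split i with inl i1 => s1 i1 | inr i2 => s2 i2 end).
split.
  by move=> i; case: (split i).
rewrite big_split_ord /= scaler_sumr; congr (_ + _); apply: eq_bigr => i _.
  by rewrite -[lshift _ _]/(unsplit (inl _)) unsplitK scalerA.
by rewrite -[rshift _ _]/(unsplit (inr _)) unsplitK.
Qed.

Lemma sum_lift p (i0 : 'I_p.+1) (c : 'I_p -> F) (v : 'I_p.+1 -> V) :
  \sum_(j < p) c j *: v (lift i0 j) =
  \sum_(i < p.+1) (if unlift i0 i is Some j then c j else 0) *: v i.
Proof.
rewrite (bigD1_ord i0) //= unlift_none scale0r add0r.
by apply: eq_bigr => j _; rewrite liftK.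
Qed.

Lemma step W p (v : 'I_p.+1 -> V) x : subsp W -> indep_mod W v ->
  exists v' : 'I_p -> V, indep_mod (ext W x) v'.
Proof.
move=> sW iv.
case: (classic (exists w0 (d : 'I_p.+1 -> F), W w0 /\ x = w0 + \sum_i d i *: v i)).
  move=> [w0 [d [W0 Ex]]].
  have [i0 Hi0] : exists i0, d i0 = 0 -> forall i, d i = 0.
    case: (classic (exists i, d i <> 0)) => [[i Hi]|H].
      by exists i => /Hi.
    exists ord0 => _ i; apply: NNPP => Hi; apply: H; by exists i.
  exists (fun j => v (lift i0 j)) => c [w [a [Ww Ew]]].
  set c' := fun i => (if unlift i0 i is Some j then c j else 0) - a * d i.
  have Hc' : W (\sum_i c' i *: v i).
    have -> : \sum_i c' i *: v i = w + a *: w0.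
      rewrite /c'.
      under eq_bigr => i _ do rewrite scalerBl.
      rewrite sumrB -sum_lift Ew.
      have -> : \sum_i (a * d i) *: v i = a *: (x - w0).
        by rewrite Ex addrC addKr scaler_sumr; apply: eq_bigr => i _; rewrite scalerA.
      by rewrite scalerBr opprB [a *: w0 - _]addrC addrA addrK.
    by apply: subsp_add => //; apply: subsp_scale.
  have ci := iv _ Hc'.
  have a0 : a * d i0 = 0.
    by move: (ci i0); rewrite /c' unlift_none sub0r => /eqP; rewrite oppr_eq0 => /eqP.
  move=> j; move: (ci (lift i0 j)); rewrite /c' liftK.
  move: a0 => /eqP; rewrite mulf_eq0 => /orP [/eqP ->|/eqP /Hi0 ->].
    by rewrite mul0r subr0.
  by rewrite mulr0 subr0.
move=> NP.
exists (fun j => v (lift ord0 j)) => c [w [a [Ww Ew]]].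
have a0 : a = 0.
  apply: NNPP => Ha; apply: NP.
  exists (- a^-1 *: w),
    (fun i => a^-1 * (if unlift ord0 i is Some j then c j else 0)); split.
    by apply: subsp_scale.
  have Ha' : a != 0 by apply/eqP.
  rewrite -[x](scalerK Ha') -[a *: x](addKr w) -Ew sum_lift scalerDr scalerN.
  rewrite scaleNr; congr (_ + _); rewrite scaler_sumr; apply: eq_bigr => i _.
  by rewrite scalerA.
move: Ew; rewrite a0 scale0r addr0 sum_lift => Ew.
have := iv _ (eq_ind_r W Ww Ew) => ci j.
by move: (ci (lift ord0 j)); rewrite liftK.
Qed.

Lemma indep_mod_sub (W W' : V -> Prop) p (v : 'I_p -> V) :
  (forall y, W y -> W' y) -> indep_mod W' v -> indep_mod W v.
Proof. by move=> H iv c Wc; apply: iv; apply: H. Qed.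

Lemma induct k : forall m W (v : 'I_(k + m) -> V) (x : 'I_k -> V),
  subsp W -> indep_mod W v -> exists z : 'I_m -> V, indep_mod (pspan W x) z.
Proof.
elim: k => [|k IH] m W v x sW iv.
  exists v; apply: indep_mod_sub iv => y [w [d [Ww ->]]].
  by rewrite big_ord0 addr0.
have [v' iv'] := step (x ord0) sW iv.
have [z iz] := IH m _ v' (fun i => x (lift ord0 i)) (subsp_ext (x ord0) sW) iv'.
exists z; apply: indep_mod_sub iz => y [w [d [Ww ->]]].
exists (w + d ord0 *: x ord0), (fun i => d (lift ord0 i)); split.
  by exists w, (d ord0).
by rewrite big_ord_recl addrA.
Qed.

Lemma cast_indep W p q (e : p = q) (v : 'I_p -> V) :
  indep_mod W v -> exists v' : 'I_q -> V, indep_mod W v'.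
Proof. by subst q; exists v. Qed.

Lemma lin_indep_ext n (h h' : 'I_n -> V) :
  (forall k, h k = h' k) -> lin_indep h' -> lin_indep h.
Proof.
move=> E H c Hc; apply: H; rewrite -[X in _ = X]Hc; apply: eq_bigr => i _; by rewrite E.
Qed.

Lemma comb n (c : 'I_n -> F) (a b : F) (Z P U : 'I_n -> V) :
  \sum_k c k *: (a *: Z k + b *: P k - U k) = 0 ->
  \sum_k (a * c k) *: Z k = \sum_k c k *: U k + \sum_k (- (b * c k)) *: P k.
Proof.
have -> : \sum_k c k *: (a *: Z k + b *: P k - U k) =
  \sum_k (a * c k) *: Z k + \sum_k (b * c k) *: P k - \sum_k c k *: U k.
  rewrite -big_split -sumrB; apply: eq_bigr => k _.
  by rewrite scalerBr scalerDr !scalerA [c k * a]mulrC [c k * b]mulrC.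
move/eqP; rewrite subr_eq0 => /eqP <-.
rewrite [X in _ = _ + X](eq_bigr (fun k => - ((b * c k) *: P k))); last by move=> k _; rewrite scaleNr.
by rewrite sumrN addrK.
Qed.

End Aux.

Theorem proposition3p3 (R : realType) (b : bool) (V : lmodType (scal R b))
    (HV : hilbert_space V) (n : nat) (J : Type) (U : J -> 'I_n -> V) :
  dim_ge V n ->
  codim_ge (lspan (fun v : V => exists (j : J) (k : 'I_n), v = U j k)) (3 * n)%N ->
  let S := fun X : 'I_n -> V => forall j : J, translate_St (U j) X in
  forall X Y : 'I_n -> V, S X -> S Y ->
  exists Z : 'I_n -> V, forall t : scal R b, 0 <= t <= 1 ->
    S (fun k => t *: Z k + (1 - t) *: X k) /\
    S (fun k => t *: Y k + (1 - t) *: Z k).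
Proof.
move=> _ [v iv] S X Y SX SY.
set W0 := lspan _ in iv.
have e : (3 * n)%N = (n + (n + n))%N by rewrite !mulSn mul0n addn0.
have [v1 iv1] := cast_indep e iv.
have [z1 iz1] := induct X (@subsp_lspan _ _ _) iv1.
have [Z iZ] := induct Y (subsp_pspan X (@subsp_lspan _ _ _)) iz1.
exists Z => t _; split => j.
  case: (SX j) => [h0 [Ih0 EX]].
  exists (fun k => t *: Z k + (1 - t) *: X k - U j k); split; last first.
    by apply: functional_extensionality => k; rewrite [RHS]addrC subrK.
  case: (eqVneq t 0) => [->|tn0].
    apply: (lin_indep_ext _ Ih0) => k.
    by rewrite scale0r add0r subr0 scale1r (equal_f EX k) /= addrC addKr.
  move=> c Hc k.
  have E := comb Hc.
  have P' : pspan (pspan W0 X) Y (\sum_k (t * c k) *: Z k).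
    rewrite E.
  exists (\sum_k c k *: U j k + \sum_k (- ((1 - t) * c k)) *: X k), (fun _ => 0).
  split; last first.
    have z0 : \sum_(i < n) 0 *: Y i = 0 :> V by rewrite big1 // => i _; rewrite scale0r.
    by rewrite z0 addr0.
  exists (\sum_k c k *: U j k), (fun k => - ((1 - t) * c k)); split => //.
  by exists n, c, (U j); split => // i; exists j, i.
  by move: (iZ _ P' k) => /eqP; rewrite mulf_eq0 (negbTE tn0) /= => /eqP.
case: (SY j) => [h0 [Ih0 EY]].
exists (fun k => t *: Y k + (1 - t) *: Z k - U j k); split; last first.
  by apply: functional_extensionality => k; rewrite [RHS]addrC subrK.
case: (eqVneq t 1) => [->|tn1].
  apply: (lin_indep_ext _ Ih0) => k.
  by rewrite subrr scale0r addr0 scale1r (equal_f EY k) /= addrC addKr.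
have tn1' : 1 - t != 0 by rewrite subr_eq0 eq_sym.
apply: (@lin_indep_ext _ _ _ _ (fun k => (1 - t) *: Z k + t *: Y k - U j k)).
  by move=> k; rewrite [t *: Y k + _]addrC.
move=> c Hc k.
have E := comb Hc.
have P' : pspan (pspan W0 X) Y (\sum_k ((1 - t) * c k) *: Z k).
  rewrite E.
exists (\sum_k c k *: U j k + \sum_k 0 *: X k), (fun k => - (t * c k)).
split; last first.
  have z0 : \sum_(i < n) 0 *: X i = 0 :> V by rewrite big1 // => i _; rewrite scale0r.
  by rewrite z0 addr0.
exists (\sum_k c k *: U j k), (fun _ => 0); split => //.
by exists n, c, (U j); split => // i; exists j, i.
by move: (iZ _ P' k) => /eqP; rewrite mulf_eq0 (negbTE tn1') /= => /eqP.
Qed.
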